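(* Let $d\ge1$, $N\ge1$ be integers, let $f:\{0,1\}^\ell\to\{0,1\}^{N+1}$ be $d$-local, and let $b$ satisfy $b^2\ge\frac14\big(1-(2d)^{-\ln 4}\big)$. Then for every function $g:\{0,1\}^N\to\{0,1\}$, $$\Delta\big(f(B_b^{\otimes\ell}),(X,g(X))\big)\ \ge\ \tfrac12-\tfrac1N,$$ where $X$ is uniform on $\{0,1\}^N$.
   Context: $B_b$ is the Bernoulli random variable equal to $0$ with probability $1/2+b$ and $1$ with probability $1/2-b$; $B_b^{\otimes\ell}$ denotes $\ell$ i.i.d. copies. A function is $d$-local if each output bit depends on at most $d$ input bits. $\Delta$ is total variation distance. *)

(* Defs.v *)
From HB Require Import structures.
From mathcomp Require Import all_boot all_order all_algebra.
From mathcomp Require Import reals exp.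
Set Implicit Arguments. Unset Strict Implicit. Unset Printing Implicit Defensive.
Import Order.TTheory GRing.Theory Num.Theory.
Local Open Scope ring_scope.

(* Bit strings {0,1}^n, with bit 0 = false, bit 1 = true. *)
Notation bits n := {ffun 'I_n -> bool}.

Definition local (l m d : nat) (f : bits l -> bits m) : Prop :=
  forall j : 'I_m, exists S : {set 'I_l}, (#|S| <= d)%N /\
    forall x x' : bits l, (forall i, i \in S -> x i = x' i) -> f x j = f x' j.

Definition bern_pmf {R : realType} (b : R) (c : bool) : R :=
  if c then 1/2 - b else 1/2 + b.

Definition push_bern {R : realType} (l m : nat) (b : R) (f : bits l -> bits m)
  (y : bits m) : R :=
  \sum_(x : bits l | f x == y) \prod_(i < l) bern_pmf b (x i).

(* The string (x, g x) in {0,1}^(N+1): last coordinate is g x. *)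
Definition append_bit (N : nat) (x : bits N) (c : bool) : bits N.+1 :=
  [ffun i : 'I_N.+1 => match unlift ord_max i with Some j => x j | None => c end].

Definition graph_law {R : realType} (N : nat) (g : bits N -> bool)
  (y : bits N.+1) : R :=
  \sum_(x : bits N | append_bit x (g x) == y) (2 ^+ N)^-1.

Definition tvd {R : realType} (T : finType) (P Q : T -> R) : R :=
  (1/2) * \sum_(t : T) `|P t - Q t|.

(* Main.v *)
Require Import Defs.
From HB Require Import structures.
From mathcomp Require Import all_boot all_order all_algebra.
From mathcomp Require Import reals sequences exp.
From mathcomp Require Import ring lra.
Import Order.TTheory GRing.Theory Num.Theory.
Set Implicit Arguments. Unset Strict Implicit.
Local Open Scope ring_scope.

Lemma expR_inv_le (R : realType) (x : R) : x < 1 -> expR x * (1 - x) <= 1.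
Proof.
move=> hx.
have h1 := expR_ge1Dx (- x).
have h2 : expR x * expR (- x) = 1 by rewrite -expRD subrr expR0.
have h3 := expR_ge0 x.
nra.
Qed.

Lemma ln2_ge (R : realType) : 5/8 <= ln (2 : R).
Proof.
have e1 : expR (1/16 : R) <= 16/15.
  have := (@expR_inv_le R (1/16) ltac:(lra)). have := expR_ge0 (1/16 : R). nra.
have e2 : expR (5/8 : R) <= 2.
  have -> : (5/8 : R) = (1/16) * 10%:R by rewrite -[10%:R]/(10 : R); lra.
  rewrite expRM_natr.
  apply: (le_trans (y := (16/15 : R) ^+ 10)).
    by apply: lerXn2r; rewrite ?nnegrE ?expR_ge0 //; lra.
  rewrite expr_div_n ler_pdivrMr ?exprn_gt0 //; last lra.
rewrite -(expRK (5/8 : R)) ler_ln ?posrE ?expR_gt0 //.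
Qed.

Lemma powR_bound (R : realType) (d : nat) : (1 <= d)%N ->
  powR (2 * d%:R : R) (- ln 4) * d%:R <= 7/16.
Proof.
move=> hd.
have hD : (1 : R) <= d%:R by rewrite ler1n.
set lam := ln (2 : R).
have hl := ln2_ge R; rewrite -/lam in hl.
have l4 : ln (4 : R) = 2 * lam.
  rewrite (_ : (4 : R) = 2 * 2); last lra.
  rewrite lnM ?posrE //; rewrite /lam; lra.
set L := ln (2 * d%:R : R).
have hLl : lam <= L by rewrite ler_ln ?posrE; lra.
have eL : expR L = 2 * d%:R by rewrite lnK // posrE; lra.
rewrite /powR ifF; last by apply/negbTE; rewrite gt_eqF //; lra.
rewrite -/L l4.
have -> : (d%:R : R) = expR L / 2 by rewrite eL; lra.
rewrite mulrA -expRD.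
have hle : - (2 * lam) * L + L <= - (5/32).
  have h1 : (L - lam) * (1 - 2 * lam) <= 0 by apply: mulr_ge0_le0; [rewrite subr_ge0 | ]; lra.
  have h2 : (lam - 5/8) * (2 * lam + 1/4) >= 0 by apply: mulr_ge0; lra.
  nra.
have h3 : expR (-(5/32) : R) <= 7/8.
  have := expR_ge1Dx (5/32 : R).
  have h2 : expR (5/32 : R) * expR (- (5/32)) = 1 by rewrite -expRD subrr expR0.
  have := expR_ge0 (- (5/32) : R). nra.
have := expR_ge0 (- (2 * lam) * L + L).
have : expR (- (2 * lam) * L + L) <= expR (-(5/32)) by rewrite ler_expR.
lra.
Qed.

Section Comb.
Variable R : realType.

Definition mu (n : nat) (b : R) (x : bits n) : R := \prod_(i < n) bern_pmf b (x i).

Lemma bern_sum (b : R) : \sum_c bern_pmf b c = 1.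
Proof. rewrite big_bool /bern_pmf /=; lra. Qed.

Lemma E_prod n (b : R) (W : 'I_n -> bool -> R) :
  \sum_(x : bits n) mu b x * \prod_i W i (x i) =
  \prod_i \sum_c bern_pmf b c * W i c.
Proof.
rewrite bigA_distr_bigA /=; apply: eq_bigr => x _.
by rewrite /mu -big_split.
Qed.

Lemma prod_if n (k : 'I_n) (F : 'I_n -> R) :
  \prod_(i < n) (if i == k then F i else 1) = F k.
Proof. by rewrite -big_mkcond big_pred1_eq. Qed.

Lemma mu_sum n (b : R) : \sum_(x : bits n) mu b x = 1.
Proof.
transitivity (\sum_(x : bits n) mu b x * \prod_(i < n) (fun (_ : 'I_n) (_ : bool) => (1:R)) i (x i)).
  by apply: eq_bigr => x _; rewrite big1_eq mulr1.
rewrite (@E_prod n b (fun _ _ => 1)); apply: big1 => i _.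
under eq_bigr do rewrite mulr1. exact: bern_sum.
Qed.

Lemma E_one n (b : R) (k : 'I_n) (w : bool -> R) :
  \sum_(x : bits n) mu b x * w (x k) = \sum_c bern_pmf b c * w c.
Proof.
pose W := fun (i : 'I_n) (c : bool) => if i == k then w c else 1.
transitivity (\sum_(x : bits n) mu b x * \prod_i W i (x i)).
  by apply: eq_bigr => x _; rewrite /W /= (prod_if k (fun i => w (x i))).
rewrite E_prod.
transitivity (\prod_i (if i == k then (\sum_c bern_pmf b c * w c) else 1)); last exact: (prod_if k (fun=> _)).
apply: eq_bigr => i _.
rewrite /W /=; case: eqP => // _; under eq_bigr do rewrite mulr1; exact: bern_sum.
Qed.

Lemma E_two n (b : R) (j k : 'I_n) (u v : bool -> R) : j != k ->
  \sum_(x : bits n) mu b x * (u (x j) * v (x k)) =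
  (\sum_c bern_pmf b c * u c) * (\sum_c bern_pmf b c * v c).
Proof.
move=> hjk.
pose W := fun (i : 'I_n) (c : bool) =>
  (if i == j then u c else 1) * (if i == k then v c else 1).
transitivity (\sum_(x : bits n) mu b x * \prod_i W i (x i)).
  by apply: eq_bigr => x _; rewrite /W /= big_split /= (prod_if j (fun i => u (x i))) (prod_if k (fun i => v (x i))).
rewrite E_prod.
rewrite -(prod_if j (fun=> \sum_c bern_pmf b c * u c)) -(prod_if k (fun=> \sum_c bern_pmf b c * v c)) -big_split /=.
apply: eq_bigr => i _; rewrite /W /=.
case: (eqVneq i j) => [->|hij].
  by rewrite (negbTE hjk) mulr1; apply: eq_bigr => c _; rewrite mulr1.
case: (eqVneq i k) => [_|hik].
  by rewrite mul1r; apply: eq_bigr => c _; rewrite mul1r.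
rewrite mulr1; transitivity (\sum_c bern_pmf b c); last exact: bern_sum.
by apply: eq_bigr => c _; rewrite !mulr1.
Qed.

Lemma sum_fiber (X Y : finType) (phi : X -> Y) (G : Y -> R) (w : X -> R) :
  \sum_y G y * \sum_(x | phi x == y) w x = \sum_x w x * G (phi x).
Proof.
transitivity (\sum_y \sum_x (if phi x == y then G y * w x else 0)).
  apply: eq_bigr => y _; rewrite big_distrr /= big_mkcond /=.
  by apply: eq_bigr => x _; case: ifP.
rewrite exchange_big; apply: eq_bigr => x _.
rewrite (bigD1 (phi x)) // eqxx big1.
  exact: (etrans (addr0 (G (phi x) * w x)) (mulrC _ _)).
by move=> y; rewrite andTb eq_sym => /negbTE ->.
Qed.

Lemma tv_lower (T : finType) (P Q h : T -> R) :
  \sum_t P t = \sum_t Q t -> (forall t, 0 <= h t <= 1) ->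
  \sum_t h t * P t - \sum_t h t * Q t <= tvd P Q.
Proof.
move=> hs hh.
have -> : \sum_t h t * P t - \sum_t h t * Q t =
          \sum_t (h t - 1/2) * (P t - Q t).
  have e : \sum_t h t * P t - \sum_t h t * Q t =
     \sum_t (h t - 1/2) * (P t - Q t) + (1/2) * (\sum_t P t - \sum_t Q t).
    rewrite -!sumrB mulr_sumr -big_split /=; apply: eq_bigr => t _; ring.
  by rewrite e hs subrr mulr0 addr0.
rewrite /tvd mulr_sumr; apply: ler_sum => t _.
have := hh t; case/andP => h1 h2.
case: (lerP 0 (P t - Q t)) => hpq.
  rewrite ger0_norm //.
  have : 0 <= (1 - h t) * (P t - Q t) by apply: mulr_ge0; lra.
  lra.
rewrite ltr0_norm //.
have : 0 <= h t * (Q t - P t) by apply: mulr_ge0; lra.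
lra.
Qed.

End Comb.

Lemma pmin_bound (R : realType) (d : nat) (hd : (1 <= d)%N) (b : R)
  (hb : -(1/2) <= b <= 1/2)
  (hb2 : b ^+ 2 >= (1/4) * (1 - powR (2 * d%:R) (- ln 4))) :
  d%:R * bern_pmf b (~~ (b < 0)) <= 1/8.
Proof.
have hP := @powR_bound R d hd.
set P := powR _ _ in hP hb2.
have hD : (1 : R) <= d%:R by rewrite ler1n.
set D := (d%:R : R) in hP hD *.
move/andP: hb => [hb1 hb2'].
set e := 2 * bern_pmf b (~~ (b < 0)).
have he : e * (2 - e) = 1 - 4 * b ^+ 2 /\ 0 <= e <= 1.
  rewrite /e /bern_pmf; case: (ltrP b 0) => hbs /=.
    split; [by field | apply/andP; split; lra].
  split; [by field | apply/andP; split; lra].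
case: he => he1 /andP [he0 he1'].
have hle : e * (2 - e) <= P by rewrite he1; lra.
have hPD : 0 <= P * D.
  have : 0 <= e * (2 - e) by apply: mulr_ge0; lra.
  nra.
suff : D * e <= 1/4 by rewrite /e; lra.
case: (lerP e (1/4)) => hq.
  have h1 : D * e * (2 - e) <= P * D by nra.
  have h2 : D * e * (7/4) <= D * e * (2 - e).
    apply: ler_wpM2l; [apply: mulr_ge0; lra | lra].
  lra.
have h3 : 7/16 <= e * (2 - e) by nra.
have h4 : e * (2 - e) * D <= P * D by apply: ler_wpM2r; lra.
have h5 : e * (2 - e) <= e * (2 - e) * D.
  rewrite -{1}[e * (2 - e)]mulr1; apply: ler_wpM2l; lra.
nra.
Qed.

Lemma mu_ge0 (R : realType) n (b : R) (x : bits n) :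
  (forall c, 0 <= bern_pmf b c) -> 0 <= mu b x.
Proof. by move=> h; apply: prodr_ge0 => i _. Qed.

Lemma mu0 (R : realType) n (x : bits n) : mu (0 : R) x = (2 ^+ n)^-1.
Proof.
rewrite /mu (eq_bigr (fun _ => 2^-1)); last first.
  by move=> i _; case: (x i); rewrite /bern_pmf ?subr0 ?addr0 div1r.
by rewrite prodr_const card_ord exprVn.
Qed.

Lemma sum_one (R : realType) n (j : 'I_n) (F : 'I_n -> R) :
  (forall k, k != j -> F k = 0) -> \sum_k F k = F j.
Proof.
move=> h; rewrite (bigD1 j) // big1; first exact: addr0.
by move=> k hk; apply: h; move: hk; rewrite andTb.
Qed.

Theorem lemmaC1 (R : realType) (d N l : nat) (hd : (1 <= d)%N) (hN : (1 <= N)%N)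
  (f : bits l -> bits N.+1) (hf : local d f) (b : R)
  (hb : -(1/2) <= b <= 1/2)
  (hb2 : b ^+ 2 >= (1/4) * (1 - powR (2 * d%:R) (- ln 4))) :
  forall g : bits N -> bool,
    tvd (push_bern b f) (graph_law g) >= 1/2 - 1 / N%:R.
Proof.
move=> g.
have hb0 : forall c, 0 <= bern_pmf b c.
  by move/andP: hb => [h1 h2]; case; rewrite /bern_pmf; lra.
have hp := @pmin_bound R d hd b hb hb2.
set cs := (b < 0) in hp.
set pm := bern_pmf b (~~ cs) in hp.
pose xs : bits l := [ffun => cs].
pose z := f xs.
pose sg (j : 'I_N) (y : bits N.+1) : R :=
  if y (lift ord_max j) == z (lift ord_max j) then 1 else -1.
pose s (y : bits N.+1) : R := \sum_(j < N) sg j y.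
have hN0 : (0 : R) < N%:R by rewrite ltr0n.
pose h (y : bits N.+1) : R := (s y / N%:R) ^+ 2.
have hs : forall y, -(N%:R) <= s y <= N%:R.
  move=> y; apply/andP; split.
    have : \sum_(j < N) (-1 : R) <= s y.
      by apply: ler_sum => j _; rewrite /sg; case: ifP => _; lra.
    by rewrite sumr_const card_ord mulNrn.
  have : s y <= \sum_(j < N) (1 : R).
    by apply: ler_sum => j _; rewrite /sg; case: ifP => _; lra.
  by rewrite sumr_const card_ord.
have hh : forall y, 0 <= h y <= 1.
  move=> y; have /andP [h1 h2] := hs y.
  rewrite /h expr_div_n; apply/andP; split.
    by apply: divr_ge0; [exact: sqr_ge0 | exact: exprn_ge0 (ltW hN0)].
  rewrite ler_pdivrMr ?exprn_gt0 // mul1r.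
  have : 0 <= (N%:R - s y) * (N%:R + s y) by apply: mulr_ge0; lra.
  nra.
have graphE : forall y, graph_law g y =
    \sum_(x | append_bit x (g x) == y) mu (0 : R) x.
  by move=> y; apply: eq_bigr => x _; rewrite mu0.
have sP : \sum_y push_bern b f y = \sum_y graph_law g y.
  transitivity (\sum_y (fun=> 1 : R) y * push_bern b f y).
    by apply: eq_bigr => y _; rewrite mul1r.
  rewrite /push_bern (sum_fiber f (fun=> 1 : R) (@mu R l b)).
  transitivity (\sum_y (fun=> 1 : R) y * graph_law g y); last first.
    by apply: eq_bigr => y _; rewrite mul1r.
  under [RHS]eq_bigr do rewrite graphE.
  rewrite (sum_fiber (fun x => append_bit x (g x)) (fun=> 1 : R) (@mu R N 0)).
  by rewrite (eq_bigr (@mu R l b)) ?mu_sum; [rewrite (eq_bigr (@mu R N 0)) ?mu_sum // => *; rewrite mulr1 | move=> *; rewrite mulr1].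
have key := tv_lower sP hh.
have Ef : 1/2 <= \sum_y h y * push_bern b f y.
  rewrite /push_bern (sum_fiber f h (@mu R l b)).
  have Ej : forall j : 'I_N, 3/4 <= \sum_(x : bits l) mu b x * sg j (f x).
    move=> j; case: (hf (lift ord_max j)) => S [hS hloc].
    have pw : forall x : bits l,
        1 - 2 * \sum_(i in S) ((x i != cs)%:R : R) <= sg j (f x).
      move=> x; have s0 : 0 <= \sum_(i in S) ((x i != cs)%:R : R).
        by apply: sumr_ge0 => i _; exact: ler0n.
      case: (boolP [forall i in S, x i == cs]) => hall.
        have e : f x (lift ord_max j) = z (lift ord_max j).
          apply: hloc => i hi; rewrite /xs ffunE.
          by apply/eqP; move/forall_inP: hall; apply.
        rewrite /sg e eqxx; lra.
      move/forall_inPn: hall => [i0 hi0 hne].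
      have s1 : 1 <= \sum_(i in S) ((x i != cs)%:R : R).
        rewrite (bigD1 i0) //= hne.
        have : 0 <= \sum_(i in S | i != i0) ((x i != cs)%:R : R).
          by apply: sumr_ge0 => i _; exact: ler0n.
        move=> hr; apply: (le_trans _ (lerD (lexx 1) hr)); rewrite addr0 //.
      have : -1 <= sg j (f x) by rewrite /sg; case: ifP => _; lra.
      lra.
    have step : \sum_(x : bits l) mu b x * (1 - 2 * \sum_(i in S) ((x i != cs)%:R : R))
        <= \sum_(x : bits l) mu b x * sg j (f x).
      by apply: ler_sum => x _; apply: ler_wpM2l; [exact: mu_ge0 | exact: pw].
    have lhsE : \sum_(x : bits l) mu b x * (1 - 2 * \sum_(i in S) ((x i != cs)%:R : R))
        = 1 - 2 * (#|S|%:R * pm).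
      transitivity (\sum_(x : bits l) mu b x
          - 2 * \sum_(i in S) \sum_(x : bits l) mu b x * (x i != cs)%:R).
        rewrite exchange_big /= mulr_sumr -sumrB.
        apply: eq_bigr => x _; rewrite mulrBr mulr1 -mulr_sumr; ring.
      rewrite mu_sum; congr (1 - 2 * _).
      rewrite mulr_natl -sumr_const; apply: eq_bigr => i _.
      rewrite (@E_one R l b i (fun c => (c != cs)%:R)) big_bool /pm.
      by case: (cs); rewrite /= ?mulr0 ?mulr1 ?addr0 ?add0r.
    have hS' : (#|S|%:R : R) <= d%:R by rewrite ler_nat.
    have pm0 : 0 <= pm by exact: hb0.
    have : #|S|%:R * pm <= d%:R * pm by apply: ler_wpM2r.
    lra.
  have low : \sum_(x : bits l) mu b x * (2 / N%:R * s (f x) - 1) <= \sum_x mu b x * h (f x).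
    apply: ler_sum => x _; apply: ler_wpM2l; first exact: mu_ge0.
    rewrite /h.
    have : 0 <= (s (f x) / N%:R - 1) ^+ 2 by exact: sqr_ge0.
    have -> : 2 / N%:R * s (f x) = 2 * (s (f x) / N%:R) by rewrite mulrA [_ / _ * _]mulrAC.
    move: (s (f x) / N%:R) => t; rewrite !expr2; nra.
  apply: le_trans low.
  have -> : \sum_(x : bits l) mu b x * (2 / N%:R * s (f x) - 1) =
     2 / N%:R * \sum_(j < N) \sum_(x : bits l) mu b x * sg j (f x) - \sum_(x : bits l) mu b x.
    rewrite exchange_big mulr_sumr -sumrB; apply: eq_bigr => x _.
    rewrite /s -!mulr_sumr; ring.
  rewrite mu_sum.
  have : \sum_(j < N) (3/4 : R) <= \sum_(j < N) \sum_(x : bits l) mu b x * sg j (f x).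
    by apply: ler_sum => j _; exact: Ej.
  rewrite sumr_const card_ord => hsum.
  have : 2 / N%:R * ((3/4 : R) *+ N) <= 2 / N%:R * \sum_(j < N) \sum_(x : bits l) mu b x * sg j (f x).
    apply: ler_wpM2l => //; apply: divr_ge0; [lra | exact: ltW].
  have -> : 2 / N%:R * ((3/4 : R) *+ N) = 3/2.
    rewrite -mulr_natr; field; exact: lt0r_neq0.
  lra.
have Eu : \sum_y h y * graph_law g y = 1 / N%:R.
  under eq_bigr do rewrite graphE.
  rewrite (sum_fiber (fun x => append_bit x (g x)) h (@mu R N 0)).
  pose eps (j : 'I_N) (c : bool) : R := if c == z (lift ord_max j) then 1 else -1.
  have sE : forall x c, s (append_bit x c) = \sum_j eps j (x j).
    by move=> x c; apply: eq_bigr => j _; rewrite /sg /eps /append_bit ffunE liftK.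
  have sq : \sum_(x : bits N) mu (0 : R) x * (\sum_j eps j (x j)) ^+ 2 = N%:R.
    transitivity (\sum_(j < N) \sum_(k < N)
        \sum_(x : bits N) mu (0 : R) x * (eps j (x j) * eps k (x k))).
      transitivity (\sum_(x : bits N) \sum_(j < N) \sum_(k < N)
          mu (0 : R) x * (eps j (x j) * eps k (x k))).
        apply: eq_bigr => x _; rewrite expr2 big_distrl mulr_sumr.
        by apply: eq_bigr => j _; rewrite /= big_distrr mulr_sumr.
      by rewrite exchange_big; apply: eq_bigr => j _; rewrite exchange_big.
    transitivity (\sum_(j < N) (1 : R)); last by rewrite sumr_const card_ord.
    apply: eq_bigr => j _.
    rewrite (@sum_one R N j).
      rewrite (eq_bigr (@mu R N 0)) ?mu_sum // => x _.
      by rewrite /eps; case: ifP => _; rewrite ?mulr1 ?mulrNN ?mulr1.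
    move=> k hk; rewrite E_two 1?eq_sym //.
    by rewrite big_bool /bern_pmf /eps /=; case: (z _); rewrite /= ?subr0 ?addr0; 
      rewrite ?mul0r; field.
  transitivity (\sum_(x : bits N) mu (0 : R) x * (\sum_j eps j (x j)) ^+ 2 / N%:R ^+ 2).
    apply: eq_bigr => x _.
    by rewrite /h sE expr_div_n mulrA.
  rewrite -mulr_suml sq expr2; field; exact: lt0r_neq0.
rewrite Eu in key; lra.
Qed.
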